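(* Let $k\ge1$, $n\ge 2k+1$, let $G$ be a spanning subgraph of $J(n;k,k+1)$, and let $m\ge3$. If for some $\gamma\in\binom{[n]}{k-1}$ the graph $H_\gamma=H_\gamma(G)$ contains a cycle of length $m$, then $G$ contains a cycle of length $2m$. Here $H_\gamma$ is the graph whose vertex set is the set of all $k$-subsets of $[n]$ containing $\gamma$, in which two distinct vertices $x,y$ are adjacent iff there is a path of length $2$ between $x$ and $y$ in $G$.
   Context: $J(n;k,k+1)$ is the bipartite graph with vertex set $\binom{[n]}{k}\cup\binom{[n]}{k+1}$ (subsets of $[n]=\{1,\dots,n\}$), with $u,v$ adjacent iff $u\subset v$ or $v\subset u$. A spanning subgraph has the same vertex set. *)

(* Defs.v *)
From mathcomp Require Import all_boot.
Set Implicit Arguments. Unset Strict Implicit. Unset Printing Implicit Defensive.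

Definition J_adj (n k : nat) (u v : {set 'I_n}) : bool :=
  ((#|u| == k) && (#|v| == k.+1) && (u \subset v)) ||
  ((#|v| == k) && (#|u| == k.+1) && (v \subset u)).

(* Vertices outside
   binom([n],k) ∪ binom([n],k+1) are then isolated and never lie on cycles. *)
Definition spanning_subgraph_J (n k : nat) (G : rel {set 'I_n}) : Prop :=
  (forall u v, G u v = G v u) /\ (forall u v, G u v -> J_adj k u v).

Definition has_cycle (T : finType) (V : pred T) (e : rel T) (m : nat) : Prop :=
  exists s : seq T, [/\ size s = m, uniq s, all V s & cycle e s].

Definition H_vert (n k : nat) (gamma : {set 'I_n}) : pred {set 'I_n} :=
  fun x => (#|x| == k) && (gamma \subset x).

Definition H_adj (n : nat) (G : rel {set 'I_n}) : rel {set 'I_n} :=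
  fun x y => (x != y) && [exists z, G x z && G z y].

(* Main.v *)
Require Import Defs.
From mathcomp Require Import all_boot zify.
Set Implicit Arguments. Unset Strict Implicit. Unset Printing Implicit Defensive.

Lemma nth_rot1 (T : Type) (x0 x : T) p i : i < (size p).+1 ->
  nth x0 (rcons p x) i = nth x0 (x :: p) (i.+1 %% (size p).+1).
Proof.
move=> Hi; rewrite nth_rcons; case: ltnP => H.
  by rewrite modn_small.
have -> : i = size p by lia.
by rewrite eqxx modnn.
Qed.

Lemma nth_rot0 (T : Type) (x0 x : T) p i : i < (size p).+1 ->
  nth x0 (x :: rcons p x) i = nth x0 (x :: p) i.
Proof.
by move=> Hi; rewrite -rcons_cons nth_rcons /= Hi.
Qed.

Lemma cycle_nthP (T : Type) (x0 : T) (e : rel T) s :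
  cycle e s <-> (forall i, i < size s -> e (nth x0 s i) (nth x0 s (i.+1 %% size s))).
Proof.
case: s => [|x p] /=; first by split => // _ i.
split.
- move/(pathP x0) => H i Hi; have := H i; rewrite size_rcons => /(_ Hi).
  by rewrite nth_rot0 // nth_rot1.
- move=> H; apply/(pathP x0) => i; rewrite size_rcons => Hi.
  by rewrite nth_rot0 // nth_rot1 //; apply: H.
Qed.

Lemma modS_case i m : i < m -> i.+1 %% m = if i.+1 == m then 0 else i.+1.
Proof.
move=> Hi; case: eqP => [->|H]; first by rewrite modnn.
by rewrite modn_small //; lia.
Qed.

Lemma inter_gamma n k (gamma x y : {set 'I_n}) :
  #|gamma| = k.-1 -> 1 <= k -> #|x| = k -> #|y| = k -> gamma \subset x -> gamma \subset y ->
  x != y -> x :&: y = gamma.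
Proof.
move=> Hg Hk Hx Hy gx gy nxy.
have gi : gamma \subset x :&: y by rewrite subsetI gx gy.
have : #|x :&: y| < k.
  rewrite ltn_neqAle -{2}Hx subset_leq_card ?subsetIl // andbT.
  apply/eqP => E; move/negP: nxy; apply.
  have e1 : x :&: y = x by apply/eqP; rewrite eqEcard subsetIl E Hx leqnn.
  have e2 : x :&: y = y by apply/eqP; rewrite eqEcard subsetIr E Hy leqnn.
  by rewrite -{1}e1 e2.
move=> Hlt; apply/esym/eqP; rewrite eqEcard gi /=. rewrite Hg; move: Hlt Hk; case: (k) => //.
Qed.

Lemma three_sets n k (gamma x y w : {set 'I_n}) :
  #|gamma| = k.-1 -> 1 <= k -> #|x| = k -> #|y| = k -> #|w| = k ->
  gamma \subset x -> gamma \subset y -> gamma \subset w ->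
  w != x -> w != y -> w \subset x :|: y -> False.
Proof.
move=> Hg Hk Hx Hy Hw gx gy gw nx ny sw.
have : w = gamma.
  by rewrite -(setIidPl sw) setIUr !(inter_gamma Hg Hk) // setUid.
move=> E; move: Hw; rewrite E Hg; lia.
Qed.

Lemma union_mid n k (G : rel {set 'I_n}) (x y z : {set 'I_n}) :
  spanning_subgraph_J k G -> #|x| = k -> #|y| = k -> x != y ->
  G x z -> G z y -> z = x :|: y /\ #|z| = k.+1.
Proof.
move=> [Gs GJ] Hx Hy nxy gxz gzy.
have /GJ : G x z by [].
rewrite /J_adj Hx eqxx /= => /orP[/andP[/eqP Hz xz]|]; last first.
  by move=> /andP[/andP[_ /eqP]]; lia.
rewrite Gs in gzy; have /GJ := gzy.
rewrite /J_adj Hy eqxx /= => /orP[/andP[/eqP _ yz]|]; last first.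
  by move=> /andP[/andP[_ /eqP]]; lia.
split=> //.
have su : x :|: y \subset z by rewrite subUset xz yz.
have : k < #|x :|: y|.
  rewrite ltnNge; apply/negP => Hle; move/negP: nxy; apply.
  have e1 : x :|: y = x by apply/eqP; rewrite eq_sym eqEcard subsetUl Hx Hle.
  have e2 : x :|: y = y by apply/eqP; rewrite eq_sym eqEcard subsetUr Hy Hle.
  by rewrite -{1}e1 e2.
move=> Hlt; apply/eqP; rewrite eq_sym eqEcard su Hz /=; exact: Hlt.
Qed.

Definition Xs n (s : seq {set 'I_n}) i := nth set0 s i.
Definition Zs n (s : seq {set 'I_n}) i := Xs s i :|: Xs s (i.+1 %% size s).
Definition fs n (s : seq {set 'I_n}) j := if odd j then Zs s j./2 else Xs s j./2.

Lemma fs_even n (s : seq {set 'I_n}) b : fs s (2 * b) = Xs s b.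
Proof. by rewrite /fs mul2n odd_double doubleK. Qed.

Lemma fs_odd n (s : seq {set 'I_n}) b : fs s (2 * b).+1 = Zs s b.
Proof. by rewrite /fs /= mul2n odd_double /= uphalf_double. Qed.

Lemma par j : (exists b, j = 2 * b) \/ (exists b, j = (2 * b).+1).
Proof.
have E := odd_double_half j; rewrite -mul2n in E.
case Ho: (odd j) E => /= E.
  by right; exists j./2; rewrite -[LHS]E add1n.
by left; exists j./2; rewrite -[LHS]E add0n.
Qed.

Theorem proposition5p1 (n k m : nat) (G : rel {set 'I_n}) (gamma : {set 'I_n}) :
  1 <= k -> 2 * k + 1 <= n -> spanning_subgraph_J k G -> 3 <= m ->
  #|gamma| = k.-1 ->
  has_cycle (H_vert k gamma) (H_adj G) m ->
  has_cycle (fun _ => true) G (2 * m).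
Proof.
move=> Hk Hn HG Hm Hg [s [Hsz Hu Hall Hcyc]]; subst m.
have HX : forall i, i < size s -> #|Xs s i| = k /\ gamma \subset Xs s i.
  move=> i Hi; have := all_nthP set0 Hall i Hi.
  by rewrite /H_vert => /andP[/eqP -> ->].
have Hmod : forall i, i < size s -> i.+1 %% size s < size s.
  by move=> i Hi; rewrite ltn_pmod //; lia.
have HZ : forall i, i < size s ->
   [/\ G (Xs s i) (Zs s i), G (Zs s i) (Xs s (i.+1 %% size s)), #|Zs s i| = k.+1
     & Xs s i != Xs s (i.+1 %% size s)].
  move=> i Hi; have := (cycle_nthP set0 _ s).1 Hcyc i Hi.
  move=> /andP[ne /existsP [z /andP[g1 g2]]].
  have [E Hz] := union_mid HG (proj1 (HX _ Hi)) (proj1 (HX _ (Hmod _ Hi))) ne g1 g2.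
  by rewrite /Zs -/(Xs s i) -/(Xs s _) -E.
have Xinj : forall a b, a < size s -> b < size s -> Xs s a = Xs s b -> a = b.
  by move=> a b Ha Hb E; apply/eqP; rewrite -(nth_uniq set0 Ha Hb Hu); apply/eqP.
have Zinj : forall a b, a < size s -> b < size s -> Zs s a = Zs s b -> a = b.
  move=> a b Ha Hb E; apply/eqP/negPn/negP => nab.
  have [Hxa ga] := HX _ Ha; have [Hxb gb] := HX _ Hb.
  have [Hya gya] := HX _ (Hmod _ Ha); have [Hyb gyb] := HX _ (Hmod _ Hb).
  have [_ _ _ nea] := HZ _ Ha; have [_ _ _ neb] := HZ _ Hb.
  have e1 : Xs s b = Xs s (a.+1 %% size s).
    apply/eqP/negPn/negP => n1.
    apply: (three_sets Hg Hk Hxa Hya Hxb ga gya gb) => //.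
      by apply/negP => /eqP /(Xinj _ _ Hb Ha) E'; rewrite E' eqxx in nab.
    by rewrite -/(Zs s a) E subsetUl.
  have e2 : Xs s (b.+1 %% size s) = Xs s a.
    apply/eqP/negPn/negP => n1.
    apply: (three_sets Hg Hk Hxa Hya Hyb ga gya gyb) => //.
      by rewrite -e1 eq_sym.
    by rewrite -/(Zs s a) E subsetUr.
  move/(Xinj _ _ Hb (Hmod _ Ha)): e1; move/(Xinj _ _ (Hmod _ Hb) Ha): e2.
  rewrite !modS_case //; case: eqP; case: eqP; lia.
have h2 : forall b, 2 * b < 2 * size s -> b < size s by move=> b; rewrite ltn_pmul2l.
have h2' : forall b, (2 * b).+1 < 2 * size s -> b < size s.
  by move=> b Hb; apply: h2; apply: ltnW.
exists (mkseq (fs s) (2 * size s)); split.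
- by rewrite size_mkseq.
- rewrite /mkseq map_inj_in_uniq ?iota_uniq // => j1 j2.
  rewrite !mem_iota /= !add0n => Hj1 Hj2.
  case: (par j1) => [][b1 ?]; case: (par j2) => [][b2 ?]; subst;
    rewrite ?fs_even ?fs_odd => E.
  + by rewrite (Xinj b1 b2) //; apply: h2.
  + have [_ _ Hz _] := HZ b2 (h2' _ Hj2); have [Hx _] := HX b1 (h2 _ Hj1).
    by move: Hz; rewrite -E Hx; lia.
  + have [_ _ Hz _] := HZ b1 (h2' _ Hj1); have [Hx _] := HX b2 (h2 _ Hj2).
    by move: Hz; rewrite E Hx; lia.
  + by rewrite (Zinj b1 b2) //; apply: h2'.
- by apply/allP.
- apply/(cycle_nthP set0); rewrite size_mkseq => j Hj.
  rewrite !nth_mkseq //; last by rewrite ltn_pmod //; lia.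
  case: (par j) => [][b Eb]; subst j.
  + rewrite fs_even modn_small; last by lia.
    by rewrite fs_odd; have [] := HZ b _; first lia.
  + have -> : (2 * b).+2 = 2 * b.+1 by lia.
    rewrite -muln_modr fs_even fs_odd.
    by have [] := HZ b _; first lia.
Qed.
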